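(* Let $y_0\in E$ and let $u$ be a positive solution of $0=\tfrac12b^2u''+\tilde au'+\eta u-u^2-d\frac{(u')^2}{u}$ on $[y_0,\infty)$ with $u(y)/\eta(y)\to1$ as $y\to\infty$. Assume that on $[y_0,\infty)$: $\eta\in C^2$, $\eta>0$, $\Psi\eta\le1$, $\tilde a\le0$, and $\bar a:=\frac{\tilde a}{\eta}+(b^2-2d)\frac{\eta'}{\eta^2}\le-C$ for some constant $C>0$; that $\Psi\eta$ is strictly increasing on $[y_0,\infty)$; and that $\eta(y)\to\infty$, $\Psi\eta(y)\to1$ and $\eta'(y)/\eta(y)\to0$ as $y\to\infty$. Then $u'(y)/u(y)\to0$ as $y\to\infty$.
   Context: $E=(E_-,\infty)$ with $E_-\in\{-\infty\}\cup\mathbb R$. $r,\lambda,\sigma,a,b,\rho,\delta:E\to\mathbb R$ are locally Lipschitz with $\sigma>0$, $b(y)\neq0$, $\rho(y)\in[-1,1]$; $R\in(0,\infty)\setminus\{1\}$. Define $\eta=\frac1R\big(\delta-(1-R)(r+\frac{\lambda^2}{2R})\big)$, $\tilde a=a+\frac{1-R}{R}\rho\lambda b$, $d=\frac12b^2((1-\rho^2)R+\rho^2+1)$, and for positive $g\in C^2$, $\Psi g=1+\frac{\frac12b^2g''+\tilde ag'}{g^2}-d\frac{(g')^2}{g^3}$. *)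

(* Defs.v *)
From Stdlib Require Import Reals.
From Coquelicot Require Import Coquelicot.
Open Scope R_scope.

(* The state space E = (E_-, +oo), with E_- in {-oo} \cup R (an Rbar). *)
Definition inE (Em : Rbar) (y : R) : Prop := Rbar_lt Em y.

Definition loc_lipschitz_on (P : R -> Prop) (f : R -> R) : Prop :=
  forall x, P x -> exists eps : R, 0 < eps /\ exists L : R,
    forall y z, Rabs (y - x) < eps -> Rabs (z - x) < eps ->
      Rabs (f y - f z) <= L * Rabs (y - z).

Definition eta_fun (Rr : R) (r lam delta : R -> R) (y : R) : R :=
  / Rr * (delta y - (1 - Rr) * (r y + (lam y)^2 / (2 * Rr))).

Definition atil (Rr : R) (a rho lam b : R -> R) (y : R) : R :=
  a y + (1 - Rr) / Rr * rho y * lam y * b y.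

Definition dfun (Rr : R) (b rho : R -> R) (y : R) : R :=
  / 2 * (b y)^2 * ((1 - (rho y)^2) * Rr + (rho y)^2 + 1).

Definition Psi (b atl d : R -> R) (g : R -> R) (y : R) : R :=
  1 + (/ 2 * (b y)^2 * Derive (Derive g) y + atl y * Derive g y) / (g y)^2
    - d y * (Derive g y)^2 / (g y)^3.

Definition C2_at (g : R -> R) (y : R) : Prop :=
  ex_derive g y /\ ex_derive (Derive g) y /\ continuous (Derive (Derive g)) y.

(* Main.v *)
Require Import Defs.
From Stdlib Require Import Reals Lra Psatz.
From Coquelicot Require Import Coquelicot.
Open Scope R_scope.
Lemma deriv_bound F x l e : is_derive F x l -> 0 < e ->
  exists d, 0 < d /\ forall h, Rabs h < d -> Rabs (F (x+h) - F x - l*h) <= e * Rabs h.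
Proof.
  intros HD He. apply is_derive_Reals in HD.
  destruct (HD e He) as [d Hd]. exists d. split; [apply cond_pos|].
  intros h Hh. destruct (Req_dec h 0) as [->|Hn].
  - rewrite Rplus_0_r, Rabs_R0. replace (F x - F x - l*0) with 0 by ring. rewrite Rabs_R0; lra.
  - specialize (Hd h Hn Hh).
    replace (F (x+h) - F x - l*h) with (((F (x + h) - F x) / h - l) * h) by (field; auto).
    rewrite Rabs_mult. apply Rmult_le_compat_r; [apply Rabs_pos|lra].
Qed.

Lemma stay_neg (F dF : R -> R) a b : a <= b ->
  (forall x, a <= x <= b -> is_derive F x (dF x)) -> F a < 0 ->
  (forall x, a < x <= b -> F x = 0 -> dF x < 0) ->
  forall x, a <= x <= b -> F x < 0.
Proof.
  intros Hab HD Ha Hz x1 Hx1.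
  destruct (Rlt_or_le (F x1) 0) as [|Hge]; [assumption|exfalso].
  set (E := fun y => a <= y <= x1 /\ forall z, a <= z <= y -> F z < 0).
  assert (HEb : bound E) by (exists x1; intros y [Hy _]; lra).
  assert (HEa : exists y, E y).
  { exists a; split; [lra|]. intros z Hz0; replace z with a by lra; auto. }
  destruct (completeness E HEb HEa) as [m [Hub Hlub]].
  assert (Ham : a <= m) by (apply Hub; destruct HEa as [y Hy]; unfold E; split; [lra|]; intros z Hz0; replace z with a by lra; auto).
  assert (Hmx : m <= x1) by (apply Hlub; intros y [Hy _]; lra).
  assert (Hcl : forall z, a <= z < m -> F z < 0).
  { intros z Hz0. destruct (Rlt_or_le (F z) 0) as [|Hz']; auto. exfalso.
    assert (m <= z); [|lra]. apply Hlub. intros y [Hy Hy'].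
    destruct (Rle_or_lt y z) as [|Hlt]; auto. specialize (Hy' z ltac:(lra)); lra. }
  assert (HDm : is_derive F m (dF m)) by (apply HD; lra).
  destruct (Rlt_or_le (F m) 0) as [Hneg|Hnn].
  - destruct (Req_dec m x1) as [Heq|Hne]; [subst; lra|].
    destruct (deriv_bound F m (dF m) 1 HDm Rlt_0_1) as [d [Hd Hb]].
    set (K := Rabs (dF m) + 1).
    assert (HK : 0 < K) by (unfold K; pose proof (Rabs_pos (dF m)); lra).
    set (h := Rmin (d/2) (Rmin (x1 - m) (- F m / (2*K)))).
    assert (Hh1 : 0 < h).
    { unfold h. apply Rmin_pos; [lra|]. apply Rmin_pos; [lra|].
      apply Rdiv_lt_0_compat; lra. }
    assert (Hh2 : h <= d/2) by apply Rmin_l.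
    assert (Hh3 : h <= x1 - m) by (unfold h; eapply Rle_trans; [apply Rmin_r|apply Rmin_l]).
    assert (Hh4 : h <= - F m / (2*K)) by (unfold h; eapply Rle_trans; [apply Rmin_r|apply Rmin_r]).
    assert (Hh5 : h * (2*K) <= - F m).
    { apply (Rmult_le_compat_r (2*K)) in Hh4; [|lra].
      replace (- F m / (2 * K) * (2 * K)) with (- F m) in Hh4 by (field; lra). lra. }
    assert (m + h <= m); [|lra].
    apply Hub. split; [lra|]. intros z Hz0.
    destruct (Rlt_or_le z m) as [Hzm|Hzm]; [apply Hcl; lra|].
    destruct (Req_dec z m) as [->|Hzn]; [assumption|].
    specialize (Hb (z - m)). replace (m + (z - m)) with z in Hb by ring.
    assert (Habs : Rabs (z - m) = z - m) by (apply Rabs_right; lra).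
    rewrite Habs in Hb. specialize (Hb ltac:(lra)).
    apply Rabs_le_between in Hb.
    pose proof (Rle_abs (dF m)).
    pose proof (Rabs_pos (dF m)).
    assert (dF m * (z - m) <= Rabs (dF m) * (z - m)) by (apply Rmult_le_compat_r; lra).
    unfold K in *. nra.
  - assert (Hma : a < m) by (destruct (Req_dec a m) as [->|]; lra).
    destruct (Rlt_or_le 0 (F m)) as [Hpos|Hzero].
    + destruct (deriv_bound F m (dF m) 1 HDm Rlt_0_1) as [d [Hd Hb]].
      set (K := Rabs (dF m) + 1).
      assert (HK : 0 < K) by (unfold K; pose proof (Rabs_pos (dF m)); lra).
      set (h := Rmin (d/2) (Rmin (m - a) (F m / (2*K)))).
      assert (Hh1 : 0 < h).
      { unfold h. apply Rmin_pos; [lra|]. apply Rmin_pos; [lra|].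
        apply Rdiv_lt_0_compat; lra. }
      assert (Hh2 : h <= d/2) by apply Rmin_l.
      assert (Hh3 : h <= m - a) by (unfold h; eapply Rle_trans; [apply Rmin_r|apply Rmin_l]).
      assert (Hh4 : h <= F m / (2*K)) by (unfold h; eapply Rle_trans; [apply Rmin_r|apply Rmin_r]).
      assert (Hh5 : h * (2*K) <= F m).
      { apply (Rmult_le_compat_r (2*K)) in Hh4; [|lra].
        replace (F m / (2 * K) * (2 * K)) with (F m) in Hh4 by (field; lra). lra. }
      specialize (Hb (-h)). rewrite Rabs_Ropp, Rabs_right in Hb; [|lra].
      specialize (Hb ltac:(lra)).
      specialize (Hcl (m + - h) ltac:(lra)).
      apply Rabs_le_between in Hb.
      pose proof (Rle_abs (dF m)). pose proof (Rle_abs (- dF m)). rewrite Rabs_Ropp in *.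
      unfold K in *. nra.
    + assert (Hm0 : F m = 0) by lra.
      assert (Hdn : dF m < 0) by (apply Hz; [lra|auto]).
      destruct (deriv_bound F m (dF m) (- dF m / 2) HDm ltac:(lra)) as [d [Hd Hb]].
      set (h := Rmin (d/2) (m - a)).
      assert (Hh1 : 0 < h) by (unfold h; apply Rmin_pos; lra).
      assert (Hh2 : h <= d/2) by apply Rmin_l.
      assert (Hh3 : h <= m - a) by apply Rmin_r.
      specialize (Hb (-h)). rewrite Rabs_Ropp, Rabs_right in Hb; [|lra].
      specialize (Hb ltac:(lra)).
      specialize (Hcl (m + - h) ltac:(lra)).
      apply Rabs_le_between in Hb. rewrite Hm0 in Hb. nra.
Qed.
Lemma lim_eps f l : is_lim f p_infty (Finite l) -> forall e, 0 < e ->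
  exists N, forall x, N < x -> Rabs (f x - l) < e.
Proof.
  intros H e He. apply is_lim_spec in H. exact (H (mkposreal e He)).
Qed.

Lemma deriv_cont f x df : is_derive f x df -> continuity_pt f x.
Proof.
  intros H. apply continuity_pt_filterlim. apply (ex_derive_continuous f x).
  exists df; exact H.
Qed.

Theorem theorem4p15
  (Em : Rbar) (r lam sigma a b rho delta : R -> R) (Rr : R)
  (Hr : loc_lipschitz_on (inE Em) r) (Hlam : loc_lipschitz_on (inE Em) lam)
  (Hsig : loc_lipschitz_on (inE Em) sigma) (Ha : loc_lipschitz_on (inE Em) a)
  (Hb : loc_lipschitz_on (inE Em) b) (Hrho : loc_lipschitz_on (inE Em) rho)
  (Hdelta : loc_lipschitz_on (inE Em) delta)
  (Hsigpos : forall y, inE Em y -> 0 < sigma y)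
  (Hbnz : forall y, inE Em y -> b y <> 0)
  (Hrhob : forall y, inE Em y -> -1 <= rho y <= 1)
  (HR : 0 < Rr) (HR1 : Rr <> 1)
  (y0 : R) (Hy0 : inE Em y0) (u : R -> R) (C : R) (HC : 0 < C) :
  let eta := eta_fun Rr r lam delta in
  let atl := atil Rr a rho lam b in
  let d := dfun Rr b rho in
  (* u is a positive (C^2) solution of the ODE on [y0, oo) *)
  (forall y, y0 <= y -> 0 < u y) ->
  (forall y, y0 <= y -> C2_at u y) ->
  (forall y, y0 <= y ->
     0 = / 2 * (b y)^2 * Derive (Derive u) y + atl y * Derive u y
         + eta y * u y - (u y)^2 - d y * (Derive u y)^2 / u y) ->
  is_lim (fun y => u y / eta y) p_infty (Finite 1) ->
  (* hypotheses on eta on [y0, oo) *)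
  (forall y, y0 <= y -> C2_at eta y) ->
  (forall y, y0 <= y -> 0 < eta y) ->
  (forall y, y0 <= y -> Psi b atl d eta y <= 1) ->
  (forall y, y0 <= y -> atl y <= 0) ->
  (forall y, y0 <= y ->
     atl y / eta y + ((b y)^2 - 2 * d y) * Derive eta y / (eta y)^2 <= - C) ->
  (forall y1 y2, y0 <= y1 -> y1 < y2 -> Psi b atl d eta y1 < Psi b atl d eta y2) ->
  is_lim eta p_infty p_infty ->
  is_lim (Psi b atl d eta) p_infty (Finite 1) ->
  is_lim (fun y => Derive eta y / eta y) p_infty (Finite 0) ->
  is_lim (fun y => Derive u y / u y) p_infty (Finite 0).
Proof.
  intros eta atl d Hupos HC2u Hode Hlimw HC2eta Hetapos HPsi Hatl Habar Hmono Hetainf HPsilim Hslim.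
  assert (Hd : forall y, d y = /2*(b y)^2*((1 - (rho y)^2)*Rr + (rho y)^2 + 1)) by reflexivity.
  clearbody eta atl d. clear HPsi Hmono HPsilim Hetainf.
  assert (HE : forall y, y0 <= y -> inE Em y).
  { intros y Hy. unfold inE in *. eapply Rbar_lt_le_trans; [exact Hy0|exact Hy]. }
  set (v := fun y => Derive u y / u y).
  set (s := fun y => Derive eta y / eta y).
  set (w := fun y => u y / eta y).
  set (dv := fun y => (Derive (Derive u) y * u y - Derive u y * Derive u y) / (u y)^2).
  set (al := fun y => /2 * (b y)^2).
  set (k := fun y => d y - /2 * (b y)^2).
  assert (HDv : forall y, y0 <= y -> is_derive v y (dv y)).
  { intros y Hy. destruct (HC2u y Hy) as [H1 [H2 _]].
    apply is_derive_div; try (apply Derive_correct; auto).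
    specialize (Hupos y Hy); lra. }
  assert (HDw : forall y, y0 <= y -> is_derive w y (w y * (v y - s y))).
  { intros y Hy. destruct (HC2u y Hy) as [H1 _]. destruct (HC2eta y Hy) as [H2 _].
    pose proof (Hupos y Hy). pose proof (Hetapos y Hy).
    assert (Hq := is_derive_div u eta y _ _ (Derive_correct _ _ H1) (Derive_correct _ _ H2) ltac:(lra)).
    replace (w y * (v y - s y)) with
      ((Derive u y * eta y - u y * Derive eta y) / eta y ^ 2); [exact Hq|].
    unfold w, v, s. field. lra. }
  assert (HK : forall y, y0 <= y -> al y * dv y = k y * (v y)^2 - atl y * v y + (u y - eta y)).
  { intros y Hy. specialize (Hode y Hy). pose proof (Hupos y Hy).
    unfold al, dv, k, v.
    set (D2 := Derive (Derive u) y) in *. set (D1 := Derive u y) in *.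
    assert (E : / 2 * b y ^ 2 * ((D2 * u y - D1 * D1) / u y ^ 2) =
      d y * (D1 / u y) ^ 2 - / 2 * b y ^ 2 * (D1 / u y) ^ 2 - atl y * (D1 / u y) + (u y - eta y)
      + (/ 2 * b y ^ 2 * D2 + atl y * D1 + eta y * u y - u y ^ 2 - d y * D1 ^ 2 / u y) / u y)
      by (field; lra).
    rewrite E, <- Hode. field. lra. }
  assert (Hcoef : forall y, y0 <= y -> 0 < al y /\ 0 <= k y /\ k y <= (Rr+1) * al y /\
                     - atl y >= C * eta y - 2 * k y * s y).
  { intros y Hy. pose proof (Hbnz y (HE y Hy)) as Hb0. pose proof (Hrhob y (HE y Hy)) as Hr0.
    pose proof (Hetapos y Hy) as He0. specialize (Habar y Hy).
    assert (Hb2 : 0 < b y ^ 2) by (apply pow2_gt_0; auto).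
    assert (Hrr : 0 <= rho y ^ 2 <= 1) by nra.
    assert (HX : 0 <= (1 - rho y ^ 2) * Rr + rho y ^ 2 <= Rr + 1) by nra.
    assert (Hk : d y - / 2 * b y ^ 2 = / 2 * b y ^ 2 * ((1 - rho y ^ 2) * Rr + rho y ^ 2))
      by (rewrite Hd; ring).
    unfold al, k. rewrite Hk. repeat split.
    - lra.
    - apply Rmult_le_pos; lra.
    - rewrite (Rmult_comm (Rr+1)). apply Rmult_le_compat_l; lra.
    - assert (Habar' : (atl y + (b y ^ 2 - 2 * d y) * s y) / eta y <= - C).
      { replace ((atl y + (b y ^ 2 - 2 * d y) * s y) / eta y) with
          (atl y / eta y + (b y ^ 2 - 2 * d y) * Derive eta y / eta y ^ 2)
          by (unfold s; field; lra). exact Habar. }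
      apply (Rmult_le_compat_r (eta y)) in Habar'; [|lra].
      replace ((atl y + (b y ^ 2 - 2 * d y) * s y) / eta y * eta y) with
        (atl y + (b y ^ 2 - 2 * d y) * s y) in Habar' by (field; lra).
      rewrite Hd in Habar'. nra. }
  clear Hode Habar Hd HC2u HC2eta.
  apply is_lim_spec. intros [e He]. simpl.
  set (M := Rr + 1).
  assert (HM : 0 < M) by (unfold M; lra).
  set (tau := Rmin (Rmin (C*e/4) (1/2)) (Rmin (e/32) (1/(100*M)))).
  assert (Ht1 : tau <= C*e/4) by (unfold tau; eapply Rle_trans; [apply Rmin_l|apply Rmin_l]).
  assert (Ht2 : tau <= 1/2) by (unfold tau; eapply Rle_trans; [apply Rmin_l|apply Rmin_r]).
  assert (Ht3 : tau <= e/32) by (unfold tau; eapply Rle_trans; [apply Rmin_r|apply Rmin_l]).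
  assert (Ht4 : tau <= 1/(100*M)) by (unfold tau; eapply Rle_trans; [apply Rmin_r|apply Rmin_r]).
  assert (Htp : 0 < tau).
  { unfold tau. repeat apply Rmin_pos; try lra.
    - apply Rmult_lt_0_compat; [apply Rmult_lt_0_compat|]; lra.
    - apply Rdiv_lt_0_compat; lra. }
  destruct (lim_eps _ _ Hlimw tau Htp) as [N1 HN1].
  destruct (lim_eps _ _ Hslim (e/4) ltac:(lra)) as [N2 HN2].
  exists (Rmax y0 (Rmax N1 N2)). intros t1 Ht.
  assert (Hall : forall x, t1 <= x -> y0 <= x /\ Rabs (w x - 1) < tau /\ Rabs (s x - 0) < e/4).
  { intros x Hx. pose proof (Rmax_l y0 (Rmax N1 N2)). pose proof (Rmax_r y0 (Rmax N1 N2)).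
    pose proof (Rmax_l N1 N2). pose proof (Rmax_r N1 N2).
    split; [lra|]. split; [apply HN1; lra|apply HN2; lra]. }
  assert (Hfact : forall x, t1 <= x -> y0 <= x /\ 1/2 <= w x /\ Rabs (w x - 1) < tau /\
     (- (e/4) < s x /\ s x < e/4) /\ 0 < eta x /\ u x = w x * eta x).
  { intros x Hx. destruct (Hall x Hx) as [H1 [H2 H3]].
    rewrite Rminus_0_r in H3. apply Rabs_def2 in H3.
    pose proof (Rabs_def2 _ _ H2). pose proof (Hetapos x H1).
    repeat split; try lra. unfold w. field. lra. }
  rewrite Rminus_0_r.
  destruct (Rlt_or_le (Rabs (v t1)) e) as [|Hge]; [assumption|exfalso].
  destruct (Rle_or_lt 0 (v t1)) as [Hvp|Hvn].
  - rewrite Rabs_right in Hge by lra.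
    assert (Hstay : forall x, t1 <= x <= t1+1 -> e/2 - v x < 0).
    { intros x Hx. apply (stay_neg (fun x => e/2 - v x) (fun x => - dv x) t1 (t1+1)); try lra.
      - intros y Hy. destruct (Hfact y ltac:(lra)) as [Hy0' _].
        assert (Hq := is_derive_minus (fun _ => e/2) v y 0 (dv y) (is_derive_const _ _) (HDv y Hy0')).
        replace (- dv y) with (minus 0 (dv y)) by (unfold minus, plus, opp; simpl; ring). exact Hq.
      - intros y Hy Hz. destruct (Hfact y ltac:(lra)) as [Hy0' [Hw1 [Hw2 [[Hs1 Hs2] [Heta Huw]]]]].
        destruct (Hcoef y Hy0') as [Hal [Hk0 [HkM Hat]]].
        pose proof (HK y Hy0') as Hk. apply Rabs_def2 in Hw2.
        assert (Hv : v y = e/2) by lra.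
        assert (Hpos : al y * dv y > 0).
        { rewrite Hk, Hv, Huw.
          assert (h1 : - atl y * (e/2) >= (C*eta y - 2*k y*s y)*(e/2)) by nra.
          assert (h2 : k y * (e/2) * (e/2 - 2 * s y) >= 0).
          { apply Rle_ge. apply Rmult_le_pos; [apply Rmult_le_pos|]; lra. }
          assert (h3 : eta y * (w y - 1) >= - eta y * (C*e/4)) by nra.
          assert (h4 : C * eta y * e > 0) by (apply Rmult_gt_0_compat; [apply Rmult_gt_0_compat|]; lra).
          nra. }
        nra. }
    destruct (MVT_gen w t1 (t1+1) (fun x => w x * (v x - s x))) as [c [Hc Heq]].
    + intros x Hx. rewrite Rmin_left, Rmax_right in Hx by lra.
      apply HDw. destruct (Hfact x ltac:(lra)); lra.
    + intros x Hx. rewrite Rmin_left, Rmax_right in Hx by lra.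
      apply (deriv_cont _ _ _ (HDw x ltac:(destruct (Hfact x ltac:(lra)); lra))).
    + rewrite Rmin_left, Rmax_right in Hc by lra.
      destruct (Hfact c ltac:(lra)) as [_ [Hw1 [_ [[Hs1 Hs2] _]]]].
      destruct (Hfact (t1+1) ltac:(lra)) as [_ [_ [Ha1 _]]].
      destruct (Hfact t1 ltac:(lra)) as [_ [_ [Ha2 _]]].
      apply Rabs_def2 in Ha1. apply Rabs_def2 in Ha2.
      specialize (Hstay c Hc).
      replace (t1 + 1 - t1) with 1 in Heq by ring.
      assert (w c * (v c - s c) >= 1/2 * (e/4)) by nra.
      nra.
  - rewrite Rabs_left in Hge by lra.
    set (A := 4/(3*e)). set (B := 4*M). set (del := 1/(6*M*e)).
    assert (HA : 0 < A) by (unfold A; apply Rdiv_lt_0_compat; lra).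
    assert (Hdel : 0 < del) by (unfold del; apply Rdiv_lt_0_compat; [lra|]; apply Rmult_lt_0_compat; lra).
    assert (HAB : A + B * del = 2/e) by (unfold A, B, del; field; lra).
    assert (Hedel : e * del = 1/(6*M)) by (unfold del; field; lra).
    set (z := fun x => - / (A + B*(x - t1))).
    assert (Hg : forall x, t1 <= x <= t1 + del -> 0 < A + B*(x - t1) /\ z x <= -e/2).
    { intros x Hx. assert (0 <= B*(x-t1) <= B*del) by (unfold B; split; nra).
      split; [lra|]. unfold z.
      assert (Hi : / (2/e) <= / (A + B*(x - t1))) by (apply Rinv_le_contravar; lra).
      replace (/ (2/e)) with (e/2) in Hi by (field; lra). lra. }
    assert (Hzd : forall x, t1 <= x -> is_derive z x (B * (z x)^2)).
    { intros x Hx. assert (0 < A + B*(x - t1)) by (unfold B; nra).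
      unfold z. auto_derive; [lra|]. field. lra. }
    assert (Hz1 : z t1 = - (3*e/4)) by (unfold z, A; replace (t1 - t1) with 0 by ring; field; lra).
    assert (Hstay : forall x, t1 <= x <= t1 + del -> v x - z x < 0).
    { intros x Hx. apply (stay_neg (fun x => v x - z x) (fun x => dv x - B * (z x)^2) t1 (t1+del)); try lra.
      - intros y Hy. destruct (Hfact y ltac:(lra)) as [Hy0' _].
        assert (Hq := is_derive_minus v z y (dv y) _ (HDv y Hy0') (Hzd y ltac:(lra))).
        exact Hq.
      - intros y Hy Hz. destruct (Hfact y ltac:(lra)) as [Hy0' [Hw1 [Hw2 [[Hs1 Hs2] [Heta Huw]]]]].
        destruct (Hcoef y Hy0') as [Hal [Hk0 [HkM Hat]]].
        destruct (Hg y ltac:(lra)) as [_ Hzy].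
        pose proof (HK y Hy0') as Hk. apply Rabs_def2 in Hw2.
        assert (Hv : v y = z y) by lra. rewrite <- Hv.
        rewrite <- Hv in Hzy.
        assert (Hle : al y * dv y <= 2 * k y * (v y)^2).
        { rewrite Hk, Huw.
          assert (h1 : - atl y * v y <= (C*eta y - 2*k y*s y) * v y) by nra.
          assert (h2 : - 2 * s y * v y <= (v y)^2) by nra.
          assert (h2' : k y * (- 2 * s y * v y) <= k y * (v y)^2) by (apply Rmult_le_compat_l; lra).
          assert (h3 : eta y * (w y - 1) <= eta y * (C*e/4)) by nra.
          assert (h4 : C * eta y * v y <= C * eta y * (-e/2)).
          { apply Rmult_le_compat_l; [apply Rmult_le_pos|]; lra. }
          nra. }
        assert (Hv2 : 0 < (v y)^2) by nra.
        assert (Hlt : al y * dv y < al y * (B * (v y)^2)).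
        { unfold B. assert (2 * k y * v y ^ 2 <= 2 * ((Rr+1) * al y) * v y^2).
          { apply Rmult_le_compat_r; [lra|]. lra. }
          assert (Hp : 0 < (Rr+1) * (al y * v y^2)) by (apply Rmult_lt_0_compat; [lra|apply Rmult_lt_0_compat; lra]).
          replace (al y * (4 * M * v y ^ 2)) with (4 * ((Rr+1) * (al y * v y^2))) by (unfold M; ring).
          replace (2 * ((Rr + 1) * al y) * v y ^ 2) with (2 * ((Rr+1) * (al y * v y^2))) in H by ring.
          lra. }
        apply Rmult_lt_reg_l in Hlt; lra. }
    destruct (MVT_gen w t1 (t1+del) (fun x => w x * (v x - s x))) as [c [Hc Heq]].
    + intros x Hx. rewrite Rmin_left, Rmax_right in Hx by lra.
      apply HDw. destruct (Hfact x ltac:(lra)); lra.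
    + intros x Hx. rewrite Rmin_left, Rmax_right in Hx by lra.
      apply (deriv_cont _ _ _ (HDw x ltac:(destruct (Hfact x ltac:(lra)); lra))).
    + rewrite Rmin_left, Rmax_right in Hc by lra.
      destruct (Hfact c ltac:(lra)) as [_ [Hw1 [_ [[Hs1 Hs2] _]]]].
      destruct (Hfact (t1+del) ltac:(lra)) as [_ [_ [Ha1 _]]].
      destruct (Hfact t1 ltac:(lra)) as [_ [_ [Ha2 _]]].
      apply Rabs_def2 in Ha1. apply Rabs_def2 in Ha2.
      specialize (Hstay c Hc). destruct (Hg c Hc) as [_ Hzc].
      replace (t1 + del - t1) with del in Heq by ring.
      assert (Hwv : w c * (v c - s c) <= 1/2 * (- (e/4))) by nra.
      assert (Hfin : w c * (v c - s c) * del <= - (e * del) / 8) by nra.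
      rewrite Hedel in Hfin.
      assert (Htau : tau * (100 * M) <= 1).
      { apply (Rmult_le_compat_r (100*M)) in Ht4; [|lra].
        replace (1 / (100 * M) * (100 * M)) with 1 in Ht4 by (field; lra). lra. }
      assert (Hm : 1/(6*M) * (6 * M) = 1) by (field; lra).
      nra.
Qed.
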